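(* Let $G$ be a Polish group. Then the family of Haar meager subsets of $G$ is a $\sigma$-ideal, i.e. every subset of a Haar meager set is Haar meager and the union of countably many Haar meager sets is Haar meager.
   Context: Let $G$ be a Polish group (not necessarily abelian). A set $A\subseteq G$ is called Haar meager if there exist a Borel set $B\subseteq G$ with $A\subseteq B$, a compact metric space $K$, and a continuous map $f\colon K\to G$ such that $f^{-1}(gBh)$ is meager in $K$ for every $g,h\in G$. *)

(* Defs.v *)
From Stdlib Require Import Reals List.
Open Scope R_scope.

Definition is_metric {X : Type} (d : X -> X -> R) : Prop :=
  (forall x y, 0 <= d x y) /\
  (forall x y, d x y = 0 <-> x = y) /\
  (forall x y, d x y = d y x) /\
  (forall x y z, d x z <= d x y + d y z).

Definition ball {X : Type} (d : X -> X -> R) (x : X) (r : R) : X -> Prop :=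
  fun y => d x y < r.

Definition m_open {X : Type} (d : X -> X -> R) (U : X -> Prop) : Prop :=
  forall x, U x -> exists r, 0 < r /\ forall y, ball d x r y -> U y.

Definition m_closure {X : Type} (d : X -> X -> R) (A : X -> Prop) : X -> Prop :=
  fun x => forall r, 0 < r -> exists a, A a /\ d x a < r.

Definition nowhere_dense {X : Type} (d : X -> X -> R) (A : X -> Prop) : Prop :=
  ~ (exists x r, 0 < r /\ forall y, ball d x r y -> m_closure d A y).

Definition meager {X : Type} (d : X -> X -> R) (A : X -> Prop) : Prop :=
  exists N : nat -> X -> Prop,
    (forall n, nowhere_dense d (N n)) /\
    (forall x, A x -> exists n, N n x).

Definition cauchy {X : Type} (d : X -> X -> R) (s : nat -> X) : Prop :=
  forall eps, 0 < eps -> exists N, forall m n, (N <= m)%nat -> (N <= n)%nat ->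
    d (s m) (s n) < eps.

Definition converges_to {X : Type} (d : X -> X -> R) (s : nat -> X) (l : X) : Prop :=
  forall eps, 0 < eps -> exists N, forall n, (N <= n)%nat -> d (s n) l < eps.

Definition complete {X : Type} (d : X -> X -> R) : Prop :=
  forall s, cauchy d s -> exists l, converges_to d s l.

Definition separable {X : Type} (d : X -> X -> R) : Prop :=
  exists s : nat -> X, forall x r, 0 < r -> exists n, d x (s n) < r.

Definition compact {X : Type} (d : X -> X -> R) : Prop :=
  forall (I : Type) (U : I -> X -> Prop),
    (forall i, m_open d (U i)) ->
    (forall x, exists i, U i x) ->
    exists l : list I, forall x, exists i, In i l /\ U i x.

Definition m_continuous {X Y : Type} (dX : X -> X -> R) (dY : Y -> Y -> R)
  (f : X -> Y) : Prop :=
  forall x eps, 0 < eps -> exists delta, 0 < delta /\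
    forall x', dX x x' < delta -> dY (f x) (f x') < eps.

(** Borel sets: the sigma-algebra generated by the open sets
    (with a constructor making it closed under extensional equality of sets). *)
Inductive borel {X : Type} (d : X -> X -> R) : (X -> Prop) -> Prop :=
  | borel_open : forall U, m_open d U -> borel d U
  | borel_compl : forall A, borel d A -> borel d (fun x => ~ A x)
  | borel_union : forall A : nat -> X -> Prop,
      (forall n, borel d (A n)) -> borel d (fun x => exists n, A n x)
  | borel_ext : forall A B, borel d A -> (forall x, A x <-> B x) -> borel d B.

Record PolishGroup := {
  pg_carrier :> Type;
  pg_mul : pg_carrier -> pg_carrier -> pg_carrier;
  pg_inv : pg_carrier -> pg_carrier;
  pg_one : pg_carrier;
  pg_mulA : forall x y z, pg_mul x (pg_mul y z) = pg_mul (pg_mul x y) z;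
  pg_mul1l : forall x, pg_mul pg_one x = x;
  pg_mul1r : forall x, pg_mul x pg_one = x;
  pg_mulVl : forall x, pg_mul (pg_inv x) x = pg_one;
  pg_mulVr : forall x, pg_mul x (pg_inv x) = pg_one;
  pg_dist : pg_carrier -> pg_carrier -> R;
  pg_metric : is_metric pg_dist;
  pg_complete : complete pg_dist;
  pg_separable : separable pg_dist;
  pg_mul_cont : forall x y eps, 0 < eps -> exists delta, 0 < delta /\
      forall x' y', pg_dist x x' < delta -> pg_dist y y' < delta ->
        pg_dist (pg_mul x y) (pg_mul x' y') < eps;
  pg_inv_cont : m_continuous pg_dist pg_dist pg_inv
}.

Record CompactMetricSpace := {
  cm_carrier :> Type;
  cm_dist : cm_carrier -> cm_carrier -> R;
  cm_metric : is_metric cm_dist;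
  cm_compact : compact cm_dist;
  cm_nonempty : inhabited cm_carrier
}.

Definition two_sided_translate (G : PolishGroup) (g : G) (B : G -> Prop) (h : G)
  : G -> Prop :=
  fun x => exists b, B b /\ x = pg_mul G (pg_mul G g b) h.

Definition haar_meager (G : PolishGroup) (A : G -> Prop) : Prop :=
  exists B : G -> Prop,
    borel (pg_dist G) B /\ (forall x, A x -> B x) /\
    exists (K : CompactMetricSpace) (f : K -> G),
      m_continuous (cm_dist K) (pg_dist G) f /\
      forall g h : G,
        meager (cm_dist K) (fun k => two_sided_translate G g B h (f k)).

(* Main.v *)
Require Import Defs.
From Stdlib Require Import Reals List.
From Stdlib Require Import Lra Lia Cantor Eqdep_dec.
From Stdlib Require Import FunctionalExtensionality ProofIrrelevance IndefiniteDescription Classical.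
Import Defs.
Open Scope R_scope.
Lemma choice_fun {A B : Type} (P : A -> B -> Prop) :
  (forall a, exists b, P a b) -> exists f : A -> B, forall a, P a (f a).
Proof.
  intros H. exists (fun a => proj1_sig (constructive_indefinite_description _ (H a))).
  intro a. exact (proj2_sig (constructive_indefinite_description _ (H a))).
Qed.

Lemma dchoice_fun {A : Type} {B : A -> Type} (P : forall a, B a -> Prop) :
  (forall a, exists b, P a b) -> exists f : (forall a, B a), forall a, P a (f a).
Proof.
  intros H. exists (fun a => proj1_sig (constructive_indefinite_description _ (H a))).
  intro a. exact (proj2_sig (constructive_indefinite_description _ (H a))).
Qed.

Definition hp (n : nat) : R := (/2)^n.

Lemma hp_pos n : 0 < hp n.
Proof. unfold hp. apply pow_lt. lra. Qed.

Lemma hp_S n : hp (S n) = hp n / 2.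
Proof. unfold hp. simpl. lra. Qed.

Lemma hp_0 : hp 0 = 1.
Proof. reflexivity. Qed.

Lemma hp_mono n m : (n <= m)%nat -> hp m <= hp n.
Proof.
  induction 1. lra. rewrite hp_S. pose proof (hp_pos m). lra.
Qed.

Lemma hp_small eps : 0 < eps -> exists N, hp N < eps.
Proof.
  intros He. destruct (pow_lt_1_zero (/2) ltac:(rewrite Rabs_pos_eq; lra) eps He) as [N HN].
  exists N. specialize (HN N (le_n N)). rewrite Rabs_pos_eq in HN. exact HN.
  left. apply pow_lt. lra.
Qed.

Section Metric.
Context {X : Type} (d : X -> X -> R) (Hd : is_metric d).

Lemma d_nonneg x y : 0 <= d x y.
Proof. destruct Hd as [H _]. apply H. Qed.
Lemma d_refl x : d x x = 0.
Proof. destruct Hd as [_ [H _]]. apply H. reflexivity. Qed.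
Lemma d_eq x y : d x y = 0 -> x = y.
Proof. destruct Hd as [_ [H _]]. apply H. Qed.
Lemma d_sym x y : d x y = d y x.
Proof. destruct Hd as [_ [_ [H _]]]. apply H. Qed.
Lemma d_tri x y z : d x z <= d x y + d y z.
Proof. destruct Hd as [_ [_ [_ H]]]. apply H. Qed.

Lemma ball_open x r : m_open d (ball d x r).
Proof.
  intros y Hy. unfold ball in *. exists (r - d x y). split. lra.
  intros z Hz. unfold ball in Hz. pose proof (d_tri x y z). lra.
Qed.

Lemma closure_incl (A : X -> Prop) x : A x -> m_closure d A x.
Proof. intros H r Hr. exists x. split; auto. rewrite d_refl. lra. Qed.

Lemma closure_closure (A : X -> Prop) x : m_closure d (m_closure d A) x -> m_closure d A x.
Proof.
  intros H r Hr. destruct (H (r/2) ltac:(lra)) as [a [Ha Hxa]].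
  destruct (Ha (r/2) ltac:(lra)) as [b [Hb Hab]]. exists b. split; auto.
  pose proof (d_tri x a b). lra.
Qed.

Lemma closure_mono (A B : X -> Prop) : (forall x, A x -> B x) -> forall x, m_closure d A x -> m_closure d B x.
Proof. intros HAB x H r Hr. destruct (H r Hr) as [a [Ha H1]]. eauto. Qed.

Lemma nd_sub (A B : X -> Prop) : (forall x, A x -> B x) -> nowhere_dense d B -> nowhere_dense d A.
Proof.
  intros HAB HB [x [r [Hr H]]]. apply HB. exists x, r. split; auto.
  intros y Hy. eapply closure_mono; eauto.
Qed.

Lemma nd_closure (A : X -> Prop) : nowhere_dense d A -> nowhere_dense d (m_closure d A).
Proof.
  intros HA [x [r [Hr H]]]. apply HA. exists x, r. split; auto.
  intros y Hy. apply closure_closure. auto.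
Qed.

Lemma nd_empty : nowhere_dense d (fun _ => False).
Proof.
  intros [x [r [Hr H]]]. assert (Hb : ball d x r x) by (unfold ball; rewrite d_refl; lra).
  destruct (H x Hb r Hr) as [a [[] _]].
Qed.

Lemma meager_sub (A B : X -> Prop) : (forall x, A x -> B x) -> meager d B -> meager d A.
Proof. intros HAB [N [H1 H2]]. exists N. split; auto. Qed.

Lemma meager_empty : meager d (fun _ => False).
Proof. exists (fun _ _ => False). split. intros; apply nd_empty. intros x []. Qed.

Lemma meager_union (A : nat -> X -> Prop) : (forall n, meager d (A n)) -> meager d (fun x => exists n, A n x).
Proof.
  intros H. apply choice_fun in H. destruct H as [N HN].
  exists (fun m => let p := Cantor.of_nat m in N (fst p) (snd p)). split.
  - intros m. apply (proj1 (HN _)).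
  - intros x [n Hn]. destruct (proj2 (HN n) x Hn) as [k Hk].
    exists (Cantor.to_nat (n, k)). cbv zeta. rewrite Cantor.cancel_of_to. exact Hk.
Qed.

Lemma meager_union2 (A B : X -> Prop) : meager d A -> meager d B -> meager d (fun x => A x \/ B x).
Proof.
  intros HA HB. apply (meager_sub _ (fun x => exists n:nat, match n with O => A x | _ => B x end)).
  - intros x [H|H]. exists O; auto. exists 1%nat; auto.
  - apply meager_union. intros [|n]; auto.
Qed.

Lemma limit_le s l a c : converges_to d s l -> (exists N, forall m, (N <= m)%nat -> d a (s m) <= c) -> d a l <= c.
Proof.
  intros Hl [N HN]. apply Rnot_lt_le. intro Hc.
  destruct (Hl (d a l - c) ltac:(lra)) as [M HM].
  specialize (HM (max N M) ltac:(lia)). specialize (HN (max N M) ltac:(lia)).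
  pose proof (d_tri a (s (max N M)) l). lra.
Qed.

Lemma limit_unique s l l' : converges_to d s l -> converges_to d s l' -> l = l'.
Proof.
  intros H1 H2. apply d_eq. apply Rle_antisym; [|apply d_nonneg].
  apply Rnot_lt_le. intro Hc.
  destruct (H1 (d l l' / 2) ltac:(lra)) as [M1 HM1].
  destruct (H2 (d l l' / 2) ltac:(lra)) as [M2 HM2].
  specialize (HM1 (max M1 M2) ltac:(lia)). specialize (HM2 (max M1 M2) ltac:(lia)).
  pose proof (d_tri l (s (max M1 M2)) l') as H. rewrite (d_sym l (s _)) in H. lra.
Qed.

Lemma geom_cauchy (s : nat -> X) (c : R) :
  (forall n, d (s n) (s (S n)) <= c * hp n) ->
  forall n m, (n <= m)%nat -> d (s n) (s m) <= 2 * c * hp n - 2 * c * hp m.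
Proof.
  intros H n m Hnm. induction Hnm.
  - rewrite d_refl. lra.
  - pose proof (d_tri (s n) (s m) (s (S m))). specialize (H m). rewrite hp_S. lra.
Qed.

Lemma geom_cauchy2 (s : nat -> X) (c : R) : 0 <= c ->
  (forall n, d (s n) (s (S n)) <= c * hp n) -> cauchy d s.
Proof.
  intros Hc H eps He.
  destruct (hp_small (eps / (2 * c + 1))) as [N HN].
  { apply Rdiv_lt_0_compat; lra. }
  exists N. intros m n Hm Hn.
  assert (Hh : forall k, (N <= k)%nat -> (2*c+1) * hp k < eps).
  { intros k Hk. pose proof (hp_mono _ _ Hk).
    apply Rmult_lt_reg_r with (/ (2*c+1)). apply Rinv_0_lt_compat; lra.
    replace ((2*c+1) * hp k * / (2*c+1)) with (hp k) by (field; lra). unfold Rdiv in HN. lra. }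
  destruct (Nat.le_ge_cases m n) as [Hmn|Hmn].
  - pose proof (geom_cauchy s c H m n Hmn). pose proof (Hh m Hm). pose proof (hp_pos n).
    assert (0 <= c * hp m) by (apply Rmult_le_pos; [lra| left; apply hp_pos]).
    assert (0 <= c * hp n) by (apply Rmult_le_pos; [lra| left; apply hp_pos]). nra.
  - pose proof (geom_cauchy s c H n m Hmn). pose proof (Hh n Hn). rewrite d_sym.
    assert (0 <= c * hp m) by (apply Rmult_le_pos; [lra| left; apply hp_pos]).
    assert (0 <= c * hp n) by (apply Rmult_le_pos; [lra| left; apply hp_pos]). nra.
Qed.

End Metric.

Definition totally_bounded {X : Type} (d : X -> X -> R) : Prop :=
  forall eps, 0 < eps -> exists l : list X, forall x, exists c, In c l /\ d x c < eps.

Section Compact.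
Context {X : Type} (d : X -> X -> R) (Hd : is_metric d).

Lemma compact_tb : compact d -> totally_bounded d.
Proof.
  intros Hc eps He.
  destruct (Hc X (fun c => ball d c eps)) as [l Hl].
  - intros c. apply ball_open; auto.
  - intros x. exists x. unfold ball. rewrite (d_refl d Hd); auto.
  - exists l. intros x. destruct (Hl x) as [c [Hc1 Hc2]]. exists c. split; auto.
    unfold ball in Hc2. rewrite (d_sym d Hd); auto.
Qed.

Lemma compact_complete : compact d -> complete d.
Proof.
  intros Hc s Hs. apply NNPP. intro Hno.
  assert (Hfar : forall x, exists r, 0 < r /\ exists N, forall n, (N <= n)%nat -> r <= d (s n) x).
  { intros x. assert (~ converges_to d s x) by eauto.
    unfold converges_to in H. apply not_all_ex_not in H. destruct H as [eps H].
    apply imply_to_and in H. destruct H as [He H].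
    destruct (Hs (eps/2) ltac:(lra)) as [N0 HN0].
    exists (eps/2). split. lra. exists N0. intros n Hn.
    apply Rnot_lt_le. intro Hlt. apply H. exists N0. intros m Hm.
    apply Rnot_le_lt. intro Hle.
    specialize (HN0 m n Hm Hn). pose proof (d_tri d Hd (s m) (s n) x). lra. }
  destruct (Hc (X * R)%type (fun p y => d (fst p) y < snd p /\ 0 < snd p /\
            exists N, forall n, (N <= n)%nat -> snd p <= d (s n) (fst p))) as [l Hl].
  - intros [x r] y [H1 [H2 H3]]. simpl in *. exists (r - d x y). split. lra.
    intros z Hz. unfold ball in Hz. split. pose proof (d_tri d Hd x y z). lra. split; auto.
  - intros y. destruct (Hfar y) as [r [Hr HN]]. exists (y, r). simpl. rewrite (d_refl d Hd); auto.
  - assert (HM : exists M, forall p, In p l -> 0 < snd p -> (exists N, forall n, (N <= n)%nat -> snd p <= d (s n) (fst p)) ->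
                   forall n, (M <= n)%nat -> snd p <= d (s n) (fst p)).
    { clear Hl. induction l as [|p l IH].
      - exists O. intros p [].
      - destruct IH as [M HM].
        destruct (classic (exists N, forall n, (N <= n)%nat -> snd p <= d (s n) (fst p))) as [[N HN]|HN].
        + exists (max M N). intros q [<-|Hq] Hpos Hex n Hn. apply HN; lia. apply HM; auto; lia.
        + exists M. intros q [<-|Hq] Hpos Hex n Hn. contradiction. apply HM; auto. }
    destruct HM as [M HM]. destruct (Hl (s M)) as [p [Hp [H1 [H2 H3]]]].
    specialize (HM p Hp H2 H3 M (le_n M)). rewrite (d_sym d Hd) in HM; auto. lra.
Qed.

Definition badset {I : Type} (U : I -> X -> Prop) (S : X -> Prop) :=
  ~ exists l : list I, forall x, S x -> exists i, In i l /\ U i x.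

Lemma ctb_compact : complete d -> totally_bounded d -> compact d.
Proof.
  intros Hc Htb I U HU Hcov. apply NNPP. intro Hno.
  assert (Hsplit : forall S eps, 0 < eps -> badset U S -> exists c, badset U (fun x => S x /\ d c x < eps)).
  { intros S eps He HS. apply NNPP. intro Hn.
    assert (Hall : forall c, ~ badset U (fun x => S x /\ d c x < eps)).
    { intros c Hb. apply Hn. eauto. }
    destruct (Htb eps He) as [L HL]. apply HS.
    assert (Hgen : forall L : list X, exists l, forall x, (exists c, In c L /\ S x /\ d c x < eps) -> exists i, In i l /\ U i x).
    { induction L0 as [|c L0 IH].
      - exists nil. intros x [c [[] _]].
      - destruct IH as [l1 Hl1]. specialize (Hall c). unfold badset in Hall. apply NNPP in Hall.
        destruct Hall as [l2 Hl2]. exists (l2 ++ l1). intros x [c' [[<-|Hc'] Hx]].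
        + destruct (Hl2 x Hx) as [i [Hi Hi']]. exists i. split; auto. apply in_or_app; auto.
        + destruct (Hl1 x) as [i [Hi Hi']]. eauto. exists i. split; auto. apply in_or_app; auto. }
    destruct (Hgen L) as [l Hl]. exists l. intros x Hx. apply Hl.
    destruct (HL x) as [c [Hc1 Hc2]]. exists c. split; auto. split; auto. rewrite (d_sym d Hd); auto. }
  assert (Hmono : forall S S', (forall x, S x -> S' x) -> badset U S -> badset U S').
  { intros S S' HSS HS [l Hl]. apply HS. exists l. auto. }
  assert (Hne : forall S, badset U S -> exists x, S x).
  { intros S HS. apply NNPP. intro Hn. apply HS. exists nil. intros x Hx. exfalso. eauto. }
  assert (Hstep : forall p : nat * X, exists c', badset U (ball d (snd p) (hp (fst p))) ->
             badset U (ball d c' (hp (S (fst p)))) /\ d (snd p) c' <= 2 * hp (fst p)).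
  { intros [j c]. simpl. destruct (classic (badset U (ball d c (hp j)))) as [Hb|Hb].
    - destruct (Hsplit _ (hp (S j)) (hp_pos _) Hb) as [c' Hc'].
      exists c'. intros _. split.
      + eapply Hmono; [|exact Hc']. intros x [_ Hx]. exact Hx.
      + destruct (Hne _ Hc') as [x [Hx1 Hx2]]. unfold ball in Hx1.
        pose proof (d_tri d Hd c x c'). rewrite (d_sym d Hd x c') in H; auto. rewrite hp_S in Hx2.
        pose proof (hp_pos j). lra.
    - exists c. intro; contradiction. }
  apply choice_fun in Hstep. destruct Hstep as [F0 HF].
  set (F := fun j c => F0 (j, c)).
  destruct (Hsplit (fun _ => True) (hp 0) (hp_pos 0)) as [c0 Hc0].
  { intros [l Hl]. apply Hno. exists l. intros x. apply Hl. exact Logic.I. }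
  set (cs := fun j => nat_rect (fun _ => X) c0 (fun j c => F j c) j).
  assert (Hbad : forall j, badset U (ball d (cs j) (hp j))).
  { induction j. - eapply Hmono; [|exact Hc0]. intros x [_ H]. exact H.
    - apply (HF (j, cs j) IHj). }
  assert (Hst : forall j, d (cs j) (cs (S j)) <= 2 * hp j).
  { intros j. apply (HF (j, cs j) (Hbad j)). }
  destruct (Hc cs (geom_cauchy2 d Hd cs 2 ltac:(lra) Hst)) as [lim Hlim].
  destruct (Hcov lim) as [i Hi]. destruct (HU i lim Hi) as [rho [Hrho Hball]].
  destruct (hp_small (rho/9) ltac:(lra)) as [j Hj].
  assert (Hdl : d (cs j) lim <= 4 * hp j).
  { apply (limit_le d Hd cs); auto. exists j. intros m Hm.
    pose proof (geom_cauchy d Hd cs 2 Hst j m Hm). pose proof (hp_pos m). lra. }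
  apply (Hbad j). exists (i :: nil). intros x Hx. exists i. split. left; auto.
  apply Hball. unfold ball in *. pose proof (d_tri d Hd lim (cs j) x). rewrite (d_sym d Hd lim (cs j)) in H; auto.
  pose proof (hp_pos j). lra.
Qed.

Lemma baire : complete d -> forall N : nat -> X -> Prop, (forall n, nowhere_dense d (N n)) ->
  forall x0 r0, 0 < r0 -> exists z, d x0 z < r0 /\ forall n, ~ N n z.
Proof.
  intros Hc N HN x0 r0 Hr0.
  assert (Hstep : forall q : nat * (X * R), exists p' : X * R, 0 < snd (snd q) ->
     0 < snd p' /\ snd p' <= snd (snd q) / 2 /\
     forall z, d (fst p') z < 2 * snd p' -> d (fst (snd q)) z < snd (snd q) /\ ~ N (fst q) z).
  { intros [n [y rho]]. simpl. destruct (Rlt_dec 0 rho) as [Hrho|Hrho]; [|exists (y, rho); intros; contradiction].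
    assert (Hex : exists z, d y z < rho /\ ~ m_closure d (N n) z).
    { apply NNPP. intro Hno. apply (HN n). exists y, rho. split; auto.
      intros z Hz. apply NNPP. intro Hz'. apply Hno. exists z. split; auto. }
    destruct Hex as [z [Hz1 Hz2]].
    assert (Hs : exists s, 0 < s /\ forall a, N n a -> s <= d z a).
    { apply NNPP. intro Hno. apply Hz2. intros r Hr. apply NNPP. intro Hno2. apply Hno.
      exists r. split; auto. intros a Ha. apply Rnot_lt_le. intro. apply Hno2. eauto. }
    destruct Hs as [s [Hs1 Hs2]].
    exists (z, Rmin (rho/2) (Rmin (s/2) ((rho - d y z)/2))). simpl. intros _.
    assert (H1 := Rmin_l (rho/2) (Rmin (s/2) ((rho - d y z)/2))).
    assert (H2 := Rmin_r (rho/2) (Rmin (s/2) ((rho - d y z)/2))).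
    assert (H3 := Rmin_l (s/2) ((rho - d y z)/2)).
    assert (H4 := Rmin_r (s/2) ((rho - d y z)/2)).
    assert (0 < Rmin (rho/2) (Rmin (s/2) ((rho - d y z)/2))).
    { apply Rmin_pos. lra. apply Rmin_pos; lra. }
    split; auto. split. lra. intros w Hw. split.
    - pose proof (d_tri d Hd y z w). lra.
    - intro Hnw. specialize (Hs2 w Hnw). lra. }
  apply choice_fun in Hstep. destruct Hstep as [F0 HF].
  set (F := fun n p => F0 (n, p)).
  assert (HF' : forall n p, 0 < snd p -> 0 < snd (F n p) /\ snd (F n p) <= snd p / 2 /\
     forall z, d (fst (F n p)) z < 2 * snd (F n p) -> d (fst p) z < snd p /\ ~ N n z).
  { intros n p Hp. exact (HF (n, p) Hp). }
  set (ps := fun j => nat_rect (fun _ => (X * R)%type) (x0, r0/2) (fun j p => F j p) j).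
  assert (Hpos : forall j, 0 < snd (ps j) /\ snd (ps j) <= r0/2 * hp j).
  { induction j. simpl. rewrite hp_0. lra.
    destruct IHj as [H1 H2]. destruct (HF' j (ps j) H1) as [H3 [H4 _]].
    change (ps (S j)) with (F j (ps j)). rewrite hp_S. split; auto. lra. }
  assert (Hnest : forall n m, (n <= m)%nat -> forall z, d (fst (ps m)) z < snd (ps m) -> d (fst (ps n)) z < snd (ps n)).
  { intros n m Hnm. induction Hnm; auto. intros z Hz. apply IHHnm.
    destruct (HF' m (ps m) (proj1 (Hpos m))) as [_ [_ H]]. apply H.
    change (ps (S m)) with (F m (ps m)) in Hz. pose proof (proj1 (Hpos (S m))).
    change (ps (S m)) with (F m (ps m)) in H0. lra. }
  assert (Hcl : forall n m, (n <= m)%nat -> d (fst (ps n)) (fst (ps m)) < snd (ps n)).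
  { intros n m Hnm. apply (Hnest n m Hnm). rewrite (d_refl d Hd). apply Hpos. }
  assert (Hcau : cauchy d (fun j => fst (ps j))).
  { intros eps He. destruct (hp_small (eps / r0)) as [K HK]. apply Rdiv_lt_0_compat; lra.
    exists K. intros m n Hm Hn.
    assert (Hb : forall k, (K <= k)%nat -> snd (ps k) < eps).
    { intros k Hk. pose proof (hp_mono _ _ Hk). destruct (Hpos k) as [_ Hk2].
      assert (hp k * r0 < eps). { apply Rmult_lt_reg_r with (/r0). apply Rinv_0_lt_compat; lra.
        replace (hp k * r0 * / r0) with (hp k) by (field; lra). unfold Rdiv in HK. lra. }
      pose proof (hp_pos k). nra. }
    destruct (Nat.le_ge_cases m n) as [Hmn|Hmn].
    - pose proof (Hcl m n Hmn). pose proof (Hb m Hm). lra.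
    - pose proof (Hcl n m Hmn). pose proof (Hb n Hn). rewrite (d_sym d Hd); auto. lra. }
  destruct (Hc _ Hcau) as [z Hz].
  assert (Hzb : forall n, d (fst (ps n)) z <= snd (ps n)).
  { intros n. apply (limit_le d Hd _ _ _ _ Hz). exists n. intros m Hm. left. apply Hcl; auto. }
  exists z. split.
  - pose proof (Hzb O). simpl in H. lra.
  - intros n. destruct (HF' n (ps n) (proj1 (Hpos n))) as [_ [_ H]].
    apply (H z). pose proof (Hzb (S n)). pose proof (proj1 (Hpos (S n))).
    change (ps (S n)) with (F n (ps n)) in H0, H1. lra.
Qed.

Definition bp (E : X -> Prop) : Prop :=
  exists U M, m_open d U /\ meager d M /\ forall x, ~ M x -> (E x <-> U x).

Lemma bp_open U : m_open d U -> bp U.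
Proof. intros HU. exists U, (fun _ => False). split; auto. split. apply (meager_empty d Hd). tauto. Qed.

Lemma bp_ext A B : bp A -> (forall x, A x <-> B x) -> bp B.
Proof. intros [U [M [H1 [H2 H3]]]] HAB. exists U, M. split; auto. split; auto. intros x Hx. rewrite <- HAB. auto. Qed.

Lemma bp_union (A : nat -> X -> Prop) : (forall n, bp (A n)) -> bp (fun x => exists n, A n x).
Proof.
  intros H. apply choice_fun in H. destruct H as [U HU]. apply choice_fun in HU. destruct HU as [M HM].
  exists (fun x => exists n, U n x), (fun x => exists n, M n x). split; [|split].
  - intros x [n Hn]. destruct (proj1 (HM n) x Hn) as [r [Hr Hb]]. exists r. split; auto. intros y Hy. exists n; auto.
  - apply meager_union; auto. intros n. apply HM.
  - intros x Hx. split; intros [n Hn]; exists n; apply (proj2 (proj2 (HM n))); auto; intro; apply Hx; eauto.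
Qed.

Lemma boundary_nd U : m_open d U -> nowhere_dense d (fun x => m_closure d U x /\ ~ U x).
Proof.
  intros HU [x [r [Hr H]]].
  assert (Hx : m_closure d U x). { apply (closure_closure d Hd). intros s Hs.
    destruct (H x ltac:(unfold ball; rewrite (d_refl d Hd); auto) s Hs) as [a [[Ha _] Hxa]]. eauto. }
  destruct (Hx (r/2) ltac:(lra)) as [u [Hu Hxu]].
  destruct (HU u Hu) as [s [Hs Hsb]].
  destruct (H u ltac:(unfold ball; lra) (Rmin s (r/2)) ltac:(apply Rmin_pos; lra)) as [a [[_ Ha] Hua]].
  apply Ha. apply Hsb. unfold ball. pose proof (Rmin_l s (r/2)). lra.
Qed.

Lemma bp_compl A : bp A -> bp (fun x => ~ A x).
Proof.
  intros [U [M [HU [HM HA]]]].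
  exists (fun x => ~ m_closure d U x), (fun x => M x \/ (m_closure d U x /\ ~ U x)). split; [|split].
  - intros x Hx. assert (Hs : exists s, 0 < s /\ forall a, U a -> s <= d x a).
    { apply NNPP. intro Hno. apply Hx. intros r Hr. apply NNPP. intro Hno2. apply Hno.
      exists r. split; auto. intros a Ha. apply Rnot_lt_le. intro. apply Hno2. eauto. }
    destruct Hs as [s [Hs Hsa]]. exists (s/2). split. lra. intros y Hy Hcy.
    destruct (Hcy (s/2) ltac:(lra)) as [a [Ha Hya]]. specialize (Hsa a Ha). unfold ball in Hy.
    pose proof (d_tri d Hd x y a). lra.
  - apply meager_union2; auto. exists (fun _ => fun x => m_closure d U x /\ ~ U x). split.
    intros; apply boundary_nd; auto. intros x Hx. exists O. exact Hx.
  - intros x Hx. split.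
    + intros HnA Hcl. apply Hx. right. split; auto. intro HUx. apply HnA. apply HA; auto.
    + intros Hncl HAx. apply Hncl. apply (closure_incl d Hd); auto. apply HA; auto.
Qed.

End Compact.

Lemma open_preimage {X Y : Type} (dX : X -> X -> R) (dY : Y -> Y -> R) (f : X -> Y) U :
  m_continuous dX dY f -> m_open dY U -> m_open dX (fun x => U (f x)).
Proof.
  intros Hf HU x Hx. destruct (HU _ Hx) as [r [Hr H]]. destruct (Hf x r Hr) as [del [Hdel H2]].
  exists del. split; auto. intros y Hy. apply H. apply H2. exact Hy.
Qed.

Lemma bp_borel {X Y : Type} (dX : X -> X -> R) (HdX : is_metric dX) (dY : Y -> Y -> R) (f : X -> Y) B :
  m_continuous dX dY f -> borel dY B -> bp dX (fun x => B (f x)).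
Proof.
  intros Hf HB. induction HB.
  - apply bp_open; auto. apply open_preimage with dY; auto.
  - apply bp_compl; auto.
  - apply bp_union with (A := fun n x => A n (f x)); auto.
  - apply bp_ext with (fun x => A (f x)); auto.
Qed.

Section Product.
Context (T : nat -> Type) (dT : forall n, T n -> T n -> R) (HdT : forall n, is_metric (dT n)).

Definition PT := forall n, T n.

Definition term (k k' : PT) n := Rmin (hp n) (dT n (k n) (k' n)).

Lemma term_bounds k k' n : 0 <= term k k' n <= hp n.
Proof.
  unfold term. pose proof (d_nonneg _ (HdT n) (k n) (k' n)). pose proof (hp_pos n).
  unfold Rmin; destruct Rle_dec; lra.
Qed.

Lemma dP_bound k k' : bound (fun r => exists n, r = term k k' n).
Proof.
  exists 1. intros r [n ->]. pose proof (Rmin_l (hp n) (dT n (k n) (k' n))). pose proof (hp_mono 0 n ltac:(lia)).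
  rewrite hp_0 in H0. unfold term. lra.
Qed.

Lemma dP_ne k k' : exists r, (fun r => exists n, r = term k k' n) r.
Proof. exists (term k k' 0). exists 0%nat. reflexivity. Qed.

Definition dP (k k' : PT) : R := proj1_sig (completeness _ (dP_bound k k') (dP_ne k k')).

Lemma dP_ge k k' n : term k k' n <= dP k k'.
Proof. unfold dP. apply (proj1 (proj2_sig (completeness _ (dP_bound k k') (dP_ne k k')))). eauto. Qed.

Lemma dP_le k k' c : (forall n, term k k' n <= c) -> dP k k' <= c.
Proof. intros H. unfold dP. apply (proj2 (proj2_sig (completeness _ (dP_bound k k') (dP_ne k k')))). intros r [n ->]. auto. Qed.

Lemma dP_metric : is_metric dP.
Proof.
  split; [|split; [|split]].
  - intros x y. pose proof (dP_ge x y 0). pose proof (term_bounds x y 0). lra.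
  - intros x y. split.
    + intros H. apply functional_extensionality_dep. intros n.
      apply (d_eq _ (HdT n)). pose proof (dP_ge x y n). pose proof (term_bounds x y n).
      unfold term in *. pose proof (hp_pos n). pose proof (d_nonneg _ (HdT n) (x n) (y n)).
      revert H0 H1. unfold Rmin; destruct Rle_dec; lra.
    + intros ->. apply Rle_antisym. apply dP_le. intros n. unfold term. rewrite (d_refl _ (HdT n)).
      pose proof (hp_pos n). unfold Rmin; destruct Rle_dec; lra.
      pose proof (dP_ge y y 0). pose proof (term_bounds y y 0). lra.
  - intros x y. apply Rle_antisym; apply dP_le; intros n; unfold term; rewrite (d_sym _ (HdT n)); apply dP_ge.
  - intros x y z. apply dP_le. intros n. pose proof (dP_ge x y n). pose proof (dP_ge y z n).
    unfold term in *. pose proof (d_tri _ (HdT n) (x n) (y n) (z n)).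
    pose proof (d_nonneg _ (HdT n) (x n) (y n)). pose proof (d_nonneg _ (HdT n) (y n) (z n)).
    pose proof (hp_pos n). revert H H0. unfold Rmin; repeat destruct Rle_dec; lra.
Qed.

Lemma dP_coord k k' n : dP k k' < hp n -> dT n (k n) (k' n) <= dP k k'.
Proof.
  intros H. pose proof (dP_ge k k' n). unfold term in H0. revert H0. unfold Rmin; destruct Rle_dec; lra.
Qed.

Lemma dP_cyl k k' N eps : (forall n, (n <= N)%nat -> dT n (k n) (k' n) <= eps) -> hp (S N) <= eps -> dP k k' <= eps.
Proof.
  intros H1 H2. apply dP_le. intros n. unfold term. destruct (Compare_dec.le_lt_dec n N) as [Hn|Hn].
  - specialize (H1 n Hn). pose proof (hp_pos n). unfold Rmin; destruct Rle_dec; lra.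
  - pose proof (hp_mono (S N) n Hn). pose proof (Rmin_l (hp n) (dT n (k n) (k' n))). lra.
Qed.

Definition upd (k : PT) (j : nat) (x : T j) : PT :=
  fun n => match Nat.eq_dec j n with left e => eq_rect j T x n e | right _ => k n end.

Lemma upd_eq k j x : upd k j x j = x.
Proof.
  unfold upd. destruct (Nat.eq_dec j j) as [e|e]; [|contradiction].
  rewrite (UIP_dec Nat.eq_dec e eq_refl). reflexivity.
Qed.

Lemma upd_neq k j x n : j <> n -> upd k j x n = k n.
Proof. intros H. unfold upd. destruct (Nat.eq_dec j n); [contradiction|reflexivity]. Qed.

Lemma upd_same k j : upd k j (k j) = k.
Proof. apply functional_extensionality_dep. intros n. unfold upd. destruct (Nat.eq_dec j n); [subst|]; reflexivity. Qed.

Lemma upd_upd k j x y : upd (upd k j x) j y = upd k j y.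
Proof. apply functional_extensionality_dep. intros n. unfold upd. destruct (Nat.eq_dec j n); reflexivity. Qed.

Lemma dP_upd1 k k' j x : dP (upd k j x) (upd k' j x) <= dP k k'.
Proof.
  apply dP_le. intros n. destruct (Nat.eq_dec j n) as [<-|Hn].
  - unfold term. rewrite !upd_eq, (d_refl _ (HdT j)). pose proof (dP_ge k k' j). pose proof (term_bounds k k' j).
    pose proof (hp_pos j). unfold Rmin; destruct Rle_dec; lra.
  - unfold term. rewrite !upd_neq; auto. apply dP_ge.
Qed.

Lemma dP_upd2 k j x y : dP (upd k j x) (upd k j y) <= dT j x y.
Proof.
  apply dP_le. intros n. unfold term. destruct (Nat.eq_dec j n) as [<-|Hn].
  - rewrite !upd_eq. apply Rmin_r.
  - rewrite !upd_neq; auto. rewrite (d_refl _ (HdT n)). pose proof (hp_pos n). pose proof (d_nonneg _ (HdT j) x y).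
    unfold Rmin; destruct Rle_dec; lra.
Qed.

Lemma coord_cauchy s n : cauchy dP s -> cauchy (dT n) (fun m => s m n).
Proof.
  intros Hs eps He. destruct (Hs (Rmin eps (hp n)) (Rmin_pos _ _ He (hp_pos n))) as [N HN].
  exists N. intros a b Ha Hb. specialize (HN a b Ha Hb). pose proof (Rmin_l eps (hp n)). pose proof (Rmin_r eps (hp n)).
  pose proof (dP_coord (s a) (s b) n ltac:(lra)). lra.
Qed.

Lemma finite_max (Q : nat -> nat -> Prop) :
  (forall n, exists M, forall m, (M <= m)%nat -> Q n m) ->
  forall N, exists M, forall n m, (n <= N)%nat -> (M <= m)%nat -> Q n m.
Proof.
  intros H N. induction N.
  - destruct (H 0%nat) as [M HM]. exists M. intros n m Hn Hm. replace n with 0%nat by lia. auto.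
  - destruct IHN as [M1 HM1]. destruct (H (S N)) as [M2 HM2]. exists (max M1 M2).
    intros n m Hn Hm. destruct (Nat.eq_dec n (S N)) as [->|Hne]. apply HM2; lia. apply HM1; lia.
Qed.

Lemma dP_complete : (forall n, complete (dT n)) -> complete dP.
Proof.
  intros Hc s Hs.
  assert (Hl : forall n, exists l : T n, converges_to (dT n) (fun m => s m n) l).
  { intros n. apply Hc. apply coord_cauchy; auto. }
  apply dchoice_fun in Hl. destruct Hl as [l Hl]. exists l.
  intros eps He. destruct (hp_small (eps/2) ltac:(lra)) as [N HN].
  destruct (finite_max (fun n m => dT n (s m n) (l n) < eps/2) (fun n => Hl n (eps/2) ltac:(lra)) N) as [M HM].
  exists M. intros m Hm. assert (dP (s m) l <= eps/2).
  { apply dP_cyl with N. intros n Hn. left. apply HM; auto. pose proof (hp_mono N (S N) ltac:(lia)). lra. }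
  lra.
Qed.

Lemma dP_tb (k0 : PT) : (forall n, totally_bounded (dT n)) -> totally_bounded dP.
Proof.
  intros Htb eps He. destruct (hp_small (eps/2) ltac:(lra)) as [N HN].
  assert (Hgen : forall N', exists l : list PT, forall k, exists p, In p l /\ forall n, (n < N')%nat -> dT n (k n) (p n) < eps/2).
  { induction N'.
    - exists (k0 :: nil). intros k. exists k0. split. left; auto. intros n Hn. lia.
    - destruct IHN' as [l Hl]. destruct (Htb N' (eps/2) ltac:(lra)) as [L HL].
      exists (flat_map (fun p => map (fun c => upd p N' c) L) l). intros k.
      destruct (Hl k) as [p [Hp Hpk]]. destruct (HL (k N')) as [c [Hc Hkc]].
      exists (upd p N' c). split.
      + apply in_flat_map. exists p. split; auto. apply in_map. auto.
      + intros n Hn. destruct (Nat.eq_dec N' n) as [<-|Hne].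
        * rewrite upd_eq. auto.
        * rewrite upd_neq; auto. apply Hpk. lia. }
  destruct (Hgen (S N)) as [l Hl]. exists l. intros k. destruct (Hl k) as [p [Hp Hkp]].
  exists p. split; auto. assert (dP k p <= eps/2).
  { apply dP_cyl with N. intros n Hn. left. apply Hkp. lia. pose proof (hp_mono N (S N) ltac:(lia)). lra. }
  lra.
Qed.

End Product.

Arguments upd {T} k j x n.

Lemma nd_meager {X : Type} (d : X -> X -> R) A : nowhere_dense d A -> meager d A.
Proof. intros H. exists (fun _ => A). split; auto. intros x Hx. exists O. auto. Qed.

Lemma baire_meager {X : Type} (d : X -> X -> R) (Hd : is_metric d) : complete d -> forall M, meager d M ->
  forall x0 r0, 0 < r0 -> exists z, d x0 z < r0 /\ ~ M z.
Proof.
  intros Hc M [N [HN HMN]] x0 r0 Hr0. destruct (baire d Hd Hc N HN x0 r0 Hr0) as [z [H1 H2]].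
  exists z. split; auto. intros HM. destruct (HMN z HM) as [n Hn]. eapply H2; eauto.
Qed.

Section KU.
Context (T : nat -> Type) (dT : forall n, T n -> T n -> R) (HdT : forall n, is_metric (dT n)).
Let d := dP T dT.
Let Hd : is_metric d := dP_metric T dT HdT.

Theorem KU (j : nat) (Hc : forall n, complete (dT n)) (Htbj : totally_bounded (dT j)) (E : PT T -> Prop) :
  bp d E -> (forall k, meager (dT j) (fun x => E (upd k j x))) -> meager d E.
Proof.
  intros [U [M [HU [[N [HNnd HMN]] HE]]]] Hsec.
  destruct (classic (exists k0, U k0)) as [[k0 Hk0]|HnU].
  2:{ apply meager_sub with (fun x => exists n, N n x). intros x Hx. apply HMN.
      apply NNPP. intro HnM. apply HnU. exists x. apply (HE x HnM). auto.
      exists N. split; auto. }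
  exfalso.
  destruct (HU k0 Hk0) as [r [Hr Hball]].
  destruct (hp_small (r/2) ltac:(lra)) as [N0 HN0].
  set (Nn := max N0 j).
  set (rho := Rmin (hp Nn) (r/2)).
  assert (Hrho : 0 < rho) by (apply Rmin_pos; [apply hp_pos|lra]).
  assert (Hcyl : forall k, (forall n, (n <= Nn)%nat -> dT n (k0 n) (k n) < r/2) -> U k).
  { intros k Hk. apply Hball. unfold ball. assert (d k0 k <= r/2).
    { apply (dP_cyl T dT) with Nn. intros n Hn. left. auto.
      pose proof (hp_mono N0 (S Nn) ltac:(unfold Nn; lia)). lra. }
    lra. }
  (* countable base of T j *)
  assert (HL : forall q : nat, exists L : list (T j), forall x, exists c, In c L /\ dT j x c < hp q).
  { intros q. apply Htbj. apply hp_pos. }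
  apply choice_fun in HL. destruct HL as [Lq HLq].
  set (V := fun q m x => dT j (nth m (Lq q) (k0 j)) x < hp q).
  set (F := fun i => m_closure d (N i)).
  set (C := fun i q m k => forall x, V q m x -> F i (upd k j x)).
  assert (HFcl : forall i k, m_closure d (F i) k -> F i k).
  { intros i k H. apply (closure_closure d Hd). exact H. }
  assert (HCcl : forall i q m k, m_closure d (C i q m) k -> C i q m k).
  { intros i q m k Hk x Hx. apply HFcl. intros eps He. destruct (Hk eps He) as [k' [Hk' Hkk']].
    exists (upd k' j x). split. apply Hk'; auto. pose proof (dP_upd1 T dT HdT k k' j x). fold d in H. lra. }
  assert (HCnd : forall i q m, nowhere_dense d (C i q m)).
  { intros i q m [k1 [s [Hs Hb]]].
    apply (HNnd i). set (c := nth m (Lq q) (k0 j)). set (k2 := upd k1 j c).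
    exists k2, (Rmin s (Rmin (hp j) (hp q))). split. apply Rmin_pos; auto. apply Rmin_pos; apply hp_pos.
    intros k Hk. unfold ball in Hk.
    pose proof (Rmin_l s (Rmin (hp j) (hp q))). pose proof (Rmin_r s (Rmin (hp j) (hp q))).
    pose proof (Rmin_l (hp j) (hp q)). pose proof (Rmin_r (hp j) (hp q)).
    assert (HC : C i q m (upd k j (k1 j))).
    { apply HCcl. apply Hb. unfold ball.
      assert (Hk1 : k1 = upd k2 j (k1 j)). { unfold k2. rewrite upd_upd, upd_same. reflexivity. }
      rewrite Hk1 at 1. pose proof (dP_upd1 T dT HdT k2 k j (k1 j)). fold d in H3. lra. }
    specialize (HC (k j)). rewrite upd_upd, upd_same in HC. apply HC.
    unfold V. fold c. pose proof (dP_coord T dT k2 k j ltac:(fold d; lra)). unfold k2 in H3 at 1.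
    rewrite upd_eq in H3. fold d in H3. lra. }
  set (C' := fun n => let p := Cantor.of_nat n in let p2 := Cantor.of_nat (snd p) in C (fst p) (fst p2) (snd p2)).
  assert (HC'nd : forall n, nowhere_dense d (C' n)).
  { intros n. unfold C'. apply HCnd. }
  destruct (baire d Hd (dP_complete T dT Hc) C' HC'nd k0 rho Hrho) as [ks [Hks Hgood]].
  assert (Hgood' : forall i q m, ~ C i q m ks).
  { intros i q m H. apply (Hgood (Cantor.to_nat (i, Cantor.to_nat (q, m)))). unfold C'.
    rewrite (Cantor.cancel_of_to (i, Cantor.to_nat (q,m))). cbn [fst snd]. rewrite (Cantor.cancel_of_to (q,m)). exact H. }
  set (S := fun i x => F i (upd ks j x)).
  assert (HSnd : forall i, nowhere_dense (dT j) (S i)).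
  { intros i [x0 [sig [Hsig Hb]]].
    assert (HScl : forall x, m_closure (dT j) (S i) x -> S i x).
    { intros x Hx. apply HFcl. intros eps He. destruct (Hx eps He) as [y [Hy Hxy]].
      exists (upd ks j y). split; auto. pose proof (dP_upd2 T dT HdT ks j x y). fold d in H. lra. }
    destruct (hp_small (sig/2) ltac:(lra)) as [q Hq].
    destruct (HLq q x0) as [c [Hc1 Hc2]].
    destruct (In_nth _ _ (k0 j) Hc1) as [m [_ Hm]].
    apply (Hgood' i q m). intros x Hx. apply HScl. apply Hb. unfold ball. unfold V in Hx. rewrite Hm in Hx.
    pose proof (d_tri _ (HdT j) x0 c x). lra. }
  assert (HW : meager (dT j) (fun x => E (upd ks j x) \/ exists i, S i x)).
  { apply meager_union2. apply Hsec. apply meager_union. intros i. apply nd_meager. auto. }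
  destruct (baire_meager (dT j) (HdT j) (Hc j) _ HW (k0 j) (r/2) ltac:(lra)) as [x [Hx1 Hx2]].
  assert (HUx : U (upd ks j x)).
  { apply Hcyl. intros n Hn. destruct (Nat.eq_dec j n) as [<-|Hne].
    - rewrite upd_eq. auto.
    - rewrite upd_neq; auto. pose proof (hp_mono n Nn Hn). pose proof (Rmin_l (hp Nn) (r/2)).
      pose proof (Rmin_r (hp Nn) (r/2)).
      assert (Hlt : dP T dT k0 ks < hp n). { change (d k0 ks < hp n). unfold rho in Hks. lra. }
      pose proof (dP_coord T dT k0 ks n Hlt). change (dT n (k0 n) (ks n) <= d k0 ks) in H2. unfold rho in Hks. lra. }
  apply Hx2. destruct (classic (M (upd ks j x))) as [HMx|HMx].
  - right. destruct (HMN _ HMx) as [i Hi]. exists i. unfold S, F. apply (closure_incl d Hd). auto.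
  - left. apply (HE _ HMx). auto.
Qed.

End KU.

Section Sub.
Context {X : Type} (d : X -> X -> R) (Hd : is_metric d) (a : X) (r : R) (Hr : 0 < r).

Definition SB := {x : X | m_closure d (ball d a r) x}.
Definition dS (u v : SB) : R := d (proj1_sig u) (proj1_sig v).

Lemma dS_metric : is_metric dS.
Proof.
  unfold dS. split; [|split; [|split]].
  - intros; apply (d_nonneg d Hd).
  - intros [x Hx] [y Hy]. simpl. split.
    + intros H. apply (d_eq d Hd) in H. subst. f_equal. apply proof_irrelevance.
    + intros H. inversion H. apply (d_refl d Hd).
  - intros; apply (d_sym d Hd).
  - intros; apply (d_tri d Hd).
Qed.

Lemma dS_complete : complete d -> complete dS.
Proof.
  intros Hc s Hs. destruct (Hc (fun n => proj1_sig (s n)) Hs) as [l Hl].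
  assert (Hcl : m_closure d (ball d a r) l).
  { apply (closure_closure d Hd). intros eps He. destruct (Hl eps He) as [N HN].
    exists (proj1_sig (s N)). split. apply proj2_sig. specialize (HN N (le_n N)). rewrite (d_sym d Hd). auto. }
  exists (exist _ l Hcl). intros eps He. destruct (Hl eps He) as [N HN]. exists N. intros n Hn. apply HN; auto.
Qed.

Lemma dS_tb : totally_bounded d -> totally_bounded dS.
Proof.
  intros Htb eps He. destruct (Htb (eps/2) ltac:(lra)) as [L HL].
  assert (Hgen : forall L : list X, exists l : list SB, forall c, In c L -> (exists s : SB, d c (proj1_sig s) < eps/2) ->
     exists s, In s l /\ d c (proj1_sig s) < eps/2).
  { induction L0 as [|c L0 IH].
    - exists nil. intros c [].
    - destruct IH as [l Hl]. destruct (classic (exists s : SB, d c (proj1_sig s) < eps/2)) as [[s Hs]|Hn].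
      + exists (s :: l). intros c' [<-|Hc'] Hex. exists s. split; auto. left; auto.
        destruct (Hl c' Hc' Hex) as [s' [H1 H2]]. exists s'. split; auto. right; auto.
      + exists l. intros c' [<-|Hc'] Hex. contradiction. auto. }
  destruct (Hgen L) as [l Hl]. exists l. intros u. destruct (HL (proj1_sig u)) as [c [Hc1 Hc2]].
  destruct (Hl c Hc1) as [s [Hs1 Hs2]]. exists u. rewrite (d_sym d Hd). auto.
  exists s. split; auto. unfold dS. pose proof (d_tri d Hd (proj1_sig u) c (proj1_sig s)). lra.
Qed.

Lemma SB_a : m_closure d (ball d a r) a.
Proof. apply (closure_incl d Hd). unfold ball. rewrite (d_refl d Hd). auto. Qed.

Lemma SB_near (u : SB) : d a (proj1_sig u) < 2 * r.
Proof.
  destruct u as [x Hx]. simpl. destruct (Hx r Hr) as [y [Hy Hxy]]. unfold ball in Hy.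
  pose proof (d_tri d Hd a y x). rewrite (d_sym d Hd y x) in H. lra.
Qed.

Lemma nd_transfer A : nowhere_dense d A -> nowhere_dense dS (fun u => A (proj1_sig u)).
Proof.
  intros HA [[x Hx] [rho [Hrho Hb]]]. apply HA.
  destruct (Hx (rho/2) ltac:(lra)) as [y [Hy Hxy]]. unfold ball in Hy.
  exists y, (Rmin (rho/2) (r - d a y)). split. apply Rmin_pos; lra.
  intros z Hz. unfold ball in Hz. pose proof (Rmin_l (rho/2) (r - d a y)). pose proof (Rmin_r (rho/2) (r - d a y)).
  assert (Hzb : m_closure d (ball d a r) z).
  { apply (closure_incl d Hd). unfold ball. pose proof (d_tri d Hd a y z). lra. }
  specialize (Hb (exist _ z Hzb)). unfold ball, dS in Hb. simpl in Hb.
  assert (Hc : m_closure dS (fun u => A (proj1_sig u)) (exist _ z Hzb)).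
  { apply Hb. pose proof (d_tri d Hd x y z). lra. }
  intros eps He. destruct (Hc eps He) as [[w Hw] [Hw1 Hw2]]. exists w. split; auto.
Qed.

Lemma meager_transfer A : meager d A -> meager dS (fun u => A (proj1_sig u)).
Proof.
  intros [N [HN HAN]]. exists (fun n u => N n (proj1_sig u)). split.
  - intros n. apply nd_transfer. auto.
  - intros u Hu. apply HAN. auto.
Qed.

End Sub.

Definition mkCMS (X : Type) (d : X -> X -> R) (Hd : is_metric d) (Hc : complete d) (Htb : totally_bounded d) (x0 : X)
  : CompactMetricSpace :=
  {| cm_carrier := X; cm_dist := d; cm_metric := Hd; cm_compact := ctb_compact d Hd Hc Htb; cm_nonempty := inhabits x0 |}.

Lemma cms_complete (K : CompactMetricSpace) : complete (cm_dist K).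
Proof. apply compact_complete. apply cm_metric. apply cm_compact. Qed.
Lemma cms_tb (K : CompactMetricSpace) : totally_bounded (cm_dist K).
Proof. apply compact_tb. apply cm_metric. apply cm_compact. Qed.

Definition SubCMS (K : CompactMetricSpace) (a : K) (r : R) (Hr : 0 < r) : CompactMetricSpace :=
  mkCMS (SB (cm_dist K) a r) (dS (cm_dist K) a r) (dS_metric _ (cm_metric K) a r)
    (dS_complete _ (cm_metric K) a r (cms_complete K)) (dS_tb _ (cm_metric K) a r (cms_tb K))
    (exist _ a (SB_a _ (cm_metric K) a r Hr)).

Lemma default_point (K : nat -> CompactMetricSpace) : inhabited (forall n, K n).
Proof.
  assert (H : forall n, exists x : K n, True). { intros n. destruct (cm_nonempty (K n)) as [x]. eauto. }
  apply dchoice_fun in H. destruct H as [f _]. constructor. exact f.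
Qed.

Definition ProdCMS (K : nat -> CompactMetricSpace) (k0 : forall n, K n) : CompactMetricSpace :=
  mkCMS (PT (fun n => K n)) (dP (fun n => K n) (fun n => cm_dist (K n)))
    (dP_metric _ _ (fun n => cm_metric (K n)))
    (dP_complete _ _ (fun n => cms_complete (K n)))
    (dP_tb _ _ k0 (fun n => cms_tb (K n))) k0.

Section Grp.
Context (G : PolishGroup).
Notation mul := (pg_mul G).
Notation inv := (pg_inv G).
Notation one := (pg_one G).
Notation dG := (pg_dist G).
Let HdG := pg_metric G.

Lemma g_inv_cancel a x : mul (inv a) (mul a x) = x.
Proof. rewrite (pg_mulA G), (pg_mulVl G), (pg_mul1l G). reflexivity. Qed.
Lemma g_cancel_inv a x : mul a (mul (inv a) x) = x.
Proof. rewrite (pg_mulA G), (pg_mulVr G), (pg_mul1l G). reflexivity. Qed.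
Lemma g_cancel_r x a : mul (mul x a) (inv a) = x.
Proof. rewrite <- (pg_mulA G), (pg_mulVr G), (pg_mul1r G). reflexivity. Qed.

Lemma cont_const {X} (dX : X -> X -> R) c : m_continuous dX dG (fun _ => c).
Proof. intros x eps He. exists 1. split. lra. intros. rewrite (d_refl dG HdG). auto. Qed.

Lemma cont_mul {X} (dX : X -> X -> R) f g : m_continuous dX dG f -> m_continuous dX dG g ->
  m_continuous dX dG (fun x => mul (f x) (g x)).
Proof.
  intros Hf Hg x eps He. destruct (pg_mul_cont G (f x) (g x) eps He) as [del [Hdel H]].
  destruct (Hf x del Hdel) as [d1 [Hd1 H1]]. destruct (Hg x del Hdel) as [d2 [Hd2 H2]].
  exists (Rmin d1 d2). split. apply Rmin_pos; auto. intros x' Hx'.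
  pose proof (Rmin_l d1 d2). pose proof (Rmin_r d1 d2). apply H. apply H1; lra. apply H2; lra.
Qed.

Lemma conv_lmul s l c : converges_to dG s l -> converges_to dG (fun m => mul c (s m)) (mul c l).
Proof.
  intros Hs eps He. destruct (pg_mul_cont G c l eps He) as [del [Hdel H]].
  destruct (Hs del Hdel) as [N HN]. exists N. intros n Hn. rewrite (d_sym dG HdG). apply H.
  rewrite (d_refl dG HdG). auto. rewrite (d_sym dG HdG). auto.
Qed.

Lemma conv_ev_eq (s s' : nat -> G) l M : converges_to dG s l -> (forall m, (M <= m)%nat -> s m = s' m) -> converges_to dG s' l.
Proof.
  intros Hs He eps Heps. destruct (Hs eps Heps) as [N HN]. exists (max N M). intros n Hn.
  rewrite <- He by lia. apply HN. lia.
Qed.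

Lemma unif_lemma (K : CompactMetricSpace) (q : K -> G) : m_continuous (cm_dist K) dG q ->
  forall eps, 0 < eps -> exists del, 0 < del /\ forall k y, dG one y < del -> dG (q k) (mul (q k) y) < eps.
Proof.
  intros Hq eps He.
  assert (Hpt : forall k : K, exists p : R * R, 0 < fst p /\ 0 < snd p /\
     (forall x' y', dG (q k) x' < fst p -> dG one y' < fst p -> dG (mul (q k) one) (mul x' y') < eps/2) /\
     (forall k', cm_dist K k k' < snd p -> dG (q k) (q k') < fst p)).
  { intros k. destruct (pg_mul_cont G (q k) one (eps/2) ltac:(lra)) as [eta [Heta H1]].
    destruct (Hq k eta Heta) as [rho [Hrho H2]]. exists (eta, rho). simpl. auto. }
  apply choice_fun in Hpt. destruct Hpt as [p Hp].
  destruct (cm_compact K K (fun k => ball (cm_dist K) k (snd (p k)))) as [l Hl].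
  - intros k. apply ball_open. apply cm_metric.
  - intros k. exists k. unfold ball. rewrite (d_refl _ (cm_metric K)). apply Hp.
  - set (del := fold_right (fun k m => Rmin (fst (p k)) m) 1 l).
    assert (Hdel : 0 < del /\ forall k, In k l -> del <= fst (p k)).
    { unfold del. clear Hl. induction l as [|k l IH]; simpl.
      - split. lra. intros _ [].
      - destruct IH as [IH1 IH2]. split. apply Rmin_pos; auto. apply Hp.
        intros k' [<-|Hk']. apply Rmin_l. pose proof (IH2 k' Hk'). pose proof (Rmin_r (fst (p k)) (fold_right (fun k0 m => Rmin (fst (p k0)) m) 1 l)). lra. }
    destruct Hdel as [Hdel1 Hdel2]. exists del. split; auto. intros k y Hy.
    destruct (Hl k) as [ki [Hki Hkk]]. unfold ball in Hkk.
    destruct (Hp ki) as [Hp1 [Hp2 [Hp3 Hp4]]]. specialize (Hp4 k Hkk). specialize (Hdel2 ki Hki).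
    pose proof (Hp3 (q k) y Hp4 ltac:(lra)) as HA.
    pose proof (Hp3 (q k) one Hp4 ltac:(rewrite (d_refl dG HdG); lra)) as HB.
    rewrite !(pg_mul1r G) in HB. rewrite (pg_mul1r G) in HA.
    pose proof (d_tri dG HdG (q k) (q ki) (mul (q k) y)). rewrite (d_sym dG HdG (q k) (q ki)) in H. lra.
Qed.

Section InfProd.
Context (T : nat -> Type) (dT : forall n, T n -> T n -> R) (HdT : forall n, is_metric (dT n))
  (h : forall n, T n -> G) (Hh : forall n, m_continuous (dT n) dG (h n)).

Fixpoint pp (N : nat) (k : PT T) : G :=
  match N with O => one | S N => mul (pp N k) (h N (k N)) end.

Lemma coord_cont n : m_continuous (dP T dT) (dT n) (fun k => k n).
Proof.
  intros k eps He. exists (Rmin eps (hp n)). split. apply Rmin_pos; auto. apply hp_pos.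
  intros k' Hk'. pose proof (Rmin_l eps (hp n)). pose proof (Rmin_r eps (hp n)).
  pose proof (dP_coord T dT k k' n ltac:(lra)). lra.
Qed.

Lemma comp_cont {X Y Z} (dX : X -> X -> R) (dY : Y -> Y -> R) (dZ : Z -> Z -> R) f g :
  m_continuous dX dY f -> m_continuous dY dZ g -> m_continuous dX dZ (fun x => g (f x)).
Proof.
  intros Hf Hg x eps He. destruct (Hg (f x) eps He) as [d1 [Hd1 H1]]. destruct (Hf x d1 Hd1) as [d2 [Hd2 H2]].
  exists d2. split; auto.
Qed.

Lemma pp_cont N : m_continuous (dP T dT) dG (pp N).
Proof.
  induction N; simpl. apply cont_const. apply cont_mul; auto.
  apply (comp_cont _ (dT N)); auto. apply coord_cont.
Qed.

Lemma pp_upd N k j x : (N <= j)%nat -> pp N (upd k j x) = pp N k.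
Proof.
  induction N; simpl; intros H; auto. rewrite IHN by lia. rewrite upd_neq by lia. reflexivity.
Qed.

Hypothesis Hstep : forall n k, dG (pp n k) (pp (S n) k) <= hp n.

Lemma infprod : exists F : PT T -> G, m_continuous (dP T dT) dG F /\
  forall k j x, F (upd k j x) = mul (mul (pp j k) (h j x)) (mul (inv (pp (S j) k)) (F k)).
Proof.
  assert (HF : forall k, exists l, converges_to dG (fun n => pp n k) l).
  { intros k. apply (pg_complete G). apply (geom_cauchy2 dG HdG _ 1). lra. intros n. rewrite Rmult_1_l. apply Hstep. }
  apply choice_fun in HF. destruct HF as [F HF]. exists F.
  assert (Hb : forall k n, dG (pp n k) (F k) <= 2 * hp n).
  { intros k n. apply (limit_le dG HdG _ _ _ _ (HF k)). exists n. intros m Hm.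
    pose proof (geom_cauchy dG HdG (fun n => pp n k) 1 ltac:(intros; rewrite Rmult_1_l; apply Hstep) n m Hm).
    pose proof (hp_pos m). cbv beta in *. lra. }
  split.
  - intros k eps He. destruct (hp_small (eps/6) ltac:(lra)) as [n Hn].
    destruct (pp_cont n k (eps/3) ltac:(lra)) as [del [Hdel H]]. exists del. split; auto.
    intros k' Hk'. specialize (H k' Hk'). pose proof (Hb k n). pose proof (Hb k' n).
    pose proof (d_tri dG HdG (F k) (pp n k) (F k')). pose proof (d_tri dG HdG (pp n k) (pp n k') (F k')).
    rewrite (d_sym dG HdG (F k) (pp n k)) in H2. lra.
  - intros k j x. set (k' := upd k j x).
    assert (Heq : forall m, (S j <= m)%nat -> mul (inv (pp (S j) k')) (pp m k') = mul (inv (pp (S j) k)) (pp m k)).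
    { intros m Hm. induction Hm.
      - rewrite !(pg_mulVl G). reflexivity.
      - change (pp (S m) k') with (mul (pp m k') (h m (k' m))).
        change (pp (S m) k) with (mul (pp m k) (h m (k m))).
        rewrite !(pg_mulA G). rewrite IHHm. unfold k'. rewrite upd_neq by lia. reflexivity. }
    assert (Hlim : mul (inv (pp (S j) k')) (F k') = mul (inv (pp (S j) k)) (F k)).
    { apply (limit_unique dG HdG (fun m => mul (inv (pp (S j) k)) (pp m k))).
      - apply conv_ev_eq with (fun m => mul (inv (pp (S j) k')) (pp m k')) (S j).
        apply conv_lmul; auto. intros m Hm. cbv beta. apply Heq. lia.
      - apply conv_lmul; auto. }
    assert (Hp : pp (S j) k' = mul (pp j k) (h j x)).
    { change (pp (S j) k') with (mul (pp j k') (h j (k' j))). unfold k'. rewrite pp_upd by lia. rewrite upd_eq. reflexivity. }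
    rewrite <- Hlim, Hp, g_cancel_inv. reflexivity.
Qed.

End InfProd.
End Grp.

Section Main.
Context (G : PolishGroup).
Notation mul := (pg_mul G).
Notation inv := (pg_inv G).
Notation one := (pg_one G).
Notation dG := (pg_dist G).
Let HdG := pg_metric G.

Lemma translate_iff g B h y : two_sided_translate G g B h y <-> B (mul (mul (inv g) y) (inv h)).
Proof.
  split.
  - intros [b [Hb ->]]. rewrite (pg_mulA G (inv g) (mul g b) h), g_inv_cancel, g_cancel_r. exact Hb.
  - intros Hb. exists (mul (mul (inv g) y) (inv h)). split; auto.
    rewrite (pg_mulA G g), g_cancel_inv, <- (pg_mulA G y), (pg_mulVl G), (pg_mul1r G). reflexivity.
Qed.

Lemma section_alg P e z t g b h :
  mul (mul P (mul e z)) t = mul (mul g b) h ->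
  z = mul (mul (mul (inv e) (mul (inv P) g)) b) (mul h (inv t)).
Proof.
  intros Heq.
  assert (H' := f_equal (fun w => mul (inv e) (mul (inv P) (mul w (inv t)))) Heq). simpl in H'.
  repeat rewrite <- (pg_mulA G) in H'. rewrite (pg_mulVr G), (pg_mul1r G), !g_inv_cancel in H'.
  rewrite H'. repeat rewrite <- (pg_mulA G). reflexivity.
Qed.

Lemma pp_iota (T : nat -> Type) (hh : forall n, T n -> G) (P : forall n, T n -> Prop) (N : nat) (k : forall n, {x : T n | P n x}) :
  pp G (fun n => {x : T n | P n x}) (fun n u => hh n (proj1_sig u)) N k = pp G T hh N (fun n => proj1_sig (k n)).
Proof. induction N; simpl; auto. rewrite IHN. reflexivity. Qed.

Lemma union_hm (A : nat -> G -> Prop) : (forall n, haar_meager G (A n)) -> haar_meager G (fun x => exists n, A n x).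
Proof.
  intros H. apply choice_fun in H. destruct H as [B HB].
  assert (H2 : forall n, exists K : CompactMetricSpace, exists f : K -> G,
      m_continuous (cm_dist K) dG f /\ forall g h, meager (cm_dist K) (fun k => two_sided_translate G g (B n) h (f k))).
  { intros n. apply HB. }
  apply choice_fun in H2. destruct H2 as [Kn HKn].
  apply dchoice_fun in HKn. destruct HKn as [fn Hfn].
  assert (Ha : forall n, exists x : Kn n, True). { intros n. destruct (cm_nonempty (Kn n)) as [x]. eauto. }
  apply dchoice_fun in Ha. destruct Ha as [a _].
  set (e := fun n => inv (fn n (a n))).
  set (hO := fun n (x : Kn n) => mul (e n) (fn n x)).
  assert (HhO : forall n, m_continuous (cm_dist (Kn n)) dG (hO n)).
  { intros n. apply cont_mul. apply cont_const. apply Hfn. }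
  set (Korig := ProdCMS Kn a).
  assert (Hdel : forall n, exists del, 0 < del /\ forall k y, dG one y < del ->
     dG (pp G (fun n => Kn n) hO n k) (mul (pp G (fun n => Kn n) hO n k) y) < hp n).
  { intros n. apply (unif_lemma G Korig (pp G (fun n => Kn n) hO n)).
    apply (pp_cont G (fun n => Kn n) (fun n => cm_dist (Kn n)) hO HhO). apply hp_pos. }
  apply choice_fun in Hdel. destruct Hdel as [del Hdel].
  assert (Hrho : forall n, exists rho, 0 < rho /\ forall x, cm_dist (Kn n) (a n) x < rho -> dG one (hO n x) < del n).
  { intros n. destruct (HhO n (a n) (del n) (proj1 (Hdel n))) as [rho [Hrho H]]. exists rho. split; auto.
    intros x Hx. specialize (H x Hx). assert (E1 : hO n (a n) = one) by (unfold hO, e; apply (pg_mulVl G)). rewrite E1 in H. exact H. }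
  apply choice_fun in Hrho. destruct Hrho as [rho Hrho].
  assert (Hr : forall n, 0 < rho n / 2). { intros n. pose proof (proj1 (Hrho n)). lra. }
  set (K'n := fun n => SubCMS (Kn n) (a n) (rho n / 2) (Hr n)).
  set (g := fun n (u : K'n n) => hO n (proj1_sig u)).
  set (k0' := fun n => (exist _ (a n) (SB_a _ (cm_metric (Kn n)) (a n) (rho n / 2) (Hr n)) : K'n n)).
  set (K' := ProdCMS K'n k0').
  assert (HdT : forall n, is_metric (cm_dist (K'n n))). { intros n. apply cm_metric. }
  assert (Hg : forall n, m_continuous (cm_dist (K'n n)) dG (g n)).
  { intros n u eps He. destruct (HhO n (proj1_sig u) eps He) as [d1 [Hd1 H]]. exists d1. split; auto.
    intros u' Hu'. apply H. exact Hu'. }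
  assert (Hpi : forall N (k : forall n, K'n n), pp G (fun n => K'n n) g N k =
      pp G (fun n => Kn n) hO N (fun i => proj1_sig (k i))).
  { induction N; intros; simpl; auto. rewrite IHN. reflexivity. }
  assert (Hstep : forall n k, dG (pp G (fun n => K'n n) g n k) (pp G (fun n => K'n n) g (S n) k) <= hp n).
  { intros n k. change (pp G (fun n => K'n n) g (S n) k) with (mul (pp G (fun n => K'n n) g n k) (g n (k n))).
    left. rewrite Hpi. apply (proj2 (Hdel n)). apply (proj2 (Hrho n)).
    pose proof (SB_near _ (cm_metric (Kn n)) (a n) (rho n / 2) (Hr n) (k n)). lra. }
  destruct (infprod G (fun n => K'n n) (fun n => cm_dist (K'n n)) g Hg Hstep) as [F [HFc HFt]].
  exists (fun x => exists n, B n x). split; [|split].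
  - apply borel_union. intros n. apply HB.
  - intros x [n Hn]. exists n. apply (proj1 (proj2 (HB n))). auto.
  - exists K', F. split. exact HFc. intros gg hh.
    apply meager_sub with (fun k => exists j, two_sided_translate G gg (B j) hh (F k)).
    { intros k [b [[j Hb] Hk]]. exists j. exists b. auto. }
    apply meager_union. intros j.
    apply (KU (fun n => K'n n) (fun n => cm_dist (K'n n)) HdT j (fun n => cms_complete (K'n n)) (cms_tb (K'n j))).
    + apply bp_ext with (fun k => B j (mul (mul (inv gg) (F k)) (inv hh))).
      * apply (bp_borel (dP (fun n => K'n n) (fun n => cm_dist (K'n n))) (dP_metric _ _ HdT) dG).
        apply cont_mul; [|apply cont_const]. apply cont_mul; [apply cont_const|]. exact HFc. apply HB.
      * intros k. rewrite translate_iff. tauto.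
    + intros k. set (P := pp G (fun n => K'n n) g j k).
      set (t := mul (inv (pp G (fun n => K'n n) g (S j) k)) (F k)).
      pose proof (proj2 (Hfn j) (mul (inv (e j)) (mul (inv P) gg)) (mul hh (inv t))) as Hm.
      apply (meager_transfer (cm_dist (Kn j)) (cm_metric (Kn j)) (a j) (rho j / 2)) in Hm.
      apply meager_sub with (2 := Hm). intros x [b [Hb Hx]].
      rewrite HFt in Hx. fold P t in Hx. exists b. split; auto.
      apply (section_alg P (e j) _ t gg b hh). exact Hx.
Qed.

End Main.

Theorem theorem2p2 (G : PolishGroup) :
  (forall A C : G -> Prop,
      haar_meager G A -> (forall x, C x -> A x) -> haar_meager G C) /\
  (forall A : nat -> G -> Prop,
      (forall n, haar_meager G (A n)) ->
      haar_meager G (fun x => exists n, A n x)).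
Proof.
  split.
  - intros A C [B [HB [HAB HK]]] HCA. exists B. split; auto.
  - apply union_hm.
Qed.
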